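(* Let $n\in\{2,3\}$ and $f\in\mathfrak{F}_{sc}$. For every density matrix $\rho$ on $\mathbb{C}^n$ with diagonal entries $\rho_{11},\dots,\rho_{nn}$ in the reference basis, $$\max_{\mathfrak{D}}\bar C_f(\mathfrak{D})=f(\rho_{11},\dots,\rho_{nn}),$$ where the maximum is over all pure state decompositions $\mathfrak{D}$ of $\rho$ (and is attained).
   Context: Fix the reference orthonormal basis $\{|i\rangle\}_{i=1}^n$ of $\mathbb{C}^n$. Let $\Omega$ be the probability simplex in $\mathbb{R}^n$. $\mathfrak{F}_{sc}$ denotes the set of functions $f:\Omega\to\mathbb{R}$ such that (i) $f((1,0,\dots,0)^T)=0$; (ii) $f(P\mathbf{x})=f(\mathbf{x})$ for every permutation matrix $P$; (iii) $f$ is concave. For a unit vector $|\psi\rangle=\sum_i\psi_i|i\rangle$, $C_f(|\psi\rangle)=f(|\psi_1|^2,\dots,|\psi_n|^2)$. A pure state decomposition of $\rho$ is a finite family $\{p_k,|\psi_k\rangle\}$ with $p_k>0$, $\sum_kp_k=1$, unit vectors $|\psi_k\rangle$ and $\rho=\sum_kp_k|\psi_k\rangle\langle\psi_k|$; its average coherence is $\bar C_f(\mathfrak{D})=\sum_kp_kC_f(|\psi_k\rangle)$. *)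

(* Defs.v *)
From HB Require Import structures.
From mathcomp Require Import all_boot all_order all_algebra.
From mathcomp Require Import fingroup perm.
From mathcomp Require Import complex.
From mathcomp Require Import reals.
Set Implicit Arguments. Unset Strict Implicit. Unset Printing Implicit Defensive.
Import Order.TTheory GRing.Theory Num.Theory.
Local Open Scope ring_scope.
Local Open Scope complex_scope.

Section Defs.
Variable R : realType.
Local Notation C := (R[i]).

Definition sqmod (z : C) : R := (complex.Re z) ^+ 2 + (complex.Im z) ^+ 2.

Definition in_simplex (n : nat) (x : 'rV[R]_n) : Prop :=
  (forall i, 0 <= x ord0 i) /\ \sum_(i < n) x ord0 i = 1.

Definition e_first (n : nat) : 'rV[R]_n := \row_(i < n) ((nat_of_ord i == 0%N)%:R).

(* the class F_sc: f : Omega -> R, given as a function on R^n whose values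
   outside Omega are irrelevant *)
Definition F_sc (n : nat) (f : 'rV[R]_n -> R) : Prop :=
  f (e_first n) = 0
  /\ (forall (s : 'S_n) (x : 'rV[R]_n), in_simplex x ->
        f (col_perm s x) = f x)
  /\ (forall (x y : 'rV[R]_n) (t : R), in_simplex x -> in_simplex y ->
        0 <= t <= 1 ->
        t * f x + (1 - t) * f y <= f (t *: x + (1 - t) *: y)).

Definition adjmx (m k : nat) (A : 'M[C]_(m, k)) : 'M[C]_(k, m) :=
  (map_mx conjc A)^T.

Definition density_matrix (n : nat) (rho : 'M[C]_n) : Prop :=
  adjmx rho = rho
  /\ (forall v : 'cV[C]_n, 0 <= (adjmx v *m rho *m v) ord0 ord0)
  /\ \tr rho = 1.

Definition unit_vector (n : nat) (psi : 'cV[C]_n) : Prop :=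
  \sum_(i < n) sqmod (psi i ord0) = 1.

Definition pure_decomposition (n m : nat) (rho : 'M[C]_n)
    (p : 'I_m -> R) (psi : 'I_m -> 'cV[C]_n) : Prop :=
  (forall k, 0 < p k) /\ \sum_(k < m) p k = 1
  /\ (forall k, unit_vector (psi k))
  /\ rho = \sum_(k < m) ((p k)%:C *: (psi k *m adjmx (psi k))).

Definition coh (n : nat) (f : 'rV[R]_n -> R) (psi : 'cV[C]_n) : R :=
  f (\row_(i < n) sqmod (psi i ord0)).

Definition avg_coh (n m : nat) (f : 'rV[R]_n -> R)
    (p : 'I_m -> R) (psi : 'I_m -> 'cV[C]_n) : R :=
  \sum_(k < m) p k * coh f (psi k).

Definition diag_vec (n : nat) (rho : 'M[C]_n) : 'rV[R]_n :=
  \row_(i < n) complex.Re (rho i i).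

End Defs.

(* Main.v *)
Require Import Defs.
From HB Require Import structures.
From mathcomp Require Import all_boot all_order all_algebra.
From mathcomp Require Import fingroup perm.
From mathcomp Require Import complex.
From mathcomp Require Import reals.
From mathcomp Require Import ring lra.
Import Order.TTheory GRing.Theory Num.Theory.
Local Open Scope ring_scope.
Local Open Scope complex_scope.
Set Implicit Arguments. Unset Strict Implicit. Unset Printing Implicit Defensive.

Section Dev.
Variable R : realType.
Local Notation C := (R[i]).
Lemma chord (z1 z2 e1 e2 : R) : z1^+2 + z2^+2 <= 1 -> e1^+2+e2^+2 = 1 ->
 exists t s1 s2, [/\ 0 <= t <= 1, (z1+s1*e1)^+2+(z2+s1*e2)^+2 = 1,
   (z1+s2*e1)^+2 + (z2+s2*e2)^+2 = 1 & t*s1+(1-t)*s2 = 0].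
Proof.
move=> hz he.
set r := z1*e1 + z2*e2.
set dd := r^+2 + 1 - (z1^+2+z2^+2).
have hdd : 0 <= dd by rewrite /dd; nra.
set sq := Num.sqrt dd.
have hsq : sq ^+ 2 = dd by rewrite /sq sqr_sqrtr.
have hsq0 : 0 <= sq by rewrite /sq sqrtr_ge0.
have key : forall s, s = - r - sq \/ s = - r + sq -> (z1+s*e1)^+2+(z2+s*e2)^+2 = 1.
  move=> s hs.
  have -> : (z1+s*e1)^+2+(z2+s*e2)^+2 = (z1^+2+z2^+2) + 2*s*r + s^2*(e1^+2+e2^+2) by rewrite /r; ring.
  rewrite he; case: hs => ->; rewrite /dd in hsq; nra.
have [sq0|sqn0] := eqVneq sq 0.
  have r0 : r = 0 by rewrite sq0 in hsq; rewrite /dd in hsq; nra.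
  exists 1, (-r - sq), (-r + sq); split; [lra| apply: key; by left| apply: key; by right|].
  rewrite sq0 r0; ring.
have sqp : 0 < sq by rewrite lt_neqAle eq_sym sqn0 hsq0.
have hr : r^+2 <= sq^+2 by rewrite hsq /dd; lra.
have hr1 : - sq <= r <= sq.
  apply/andP; split; nra.
exists ((sq - r)/(2*sq)), (-r - sq), (-r + sq); split.
- apply/andP; split.
    apply: divr_ge0; lra.
  rewrite ler_pdivrMr; lra.
- by apply: key; left.
- by apply: key; right.
- field; lra.
Qed.
Definition Qc (a b c v1 v2 v3 : C) : C :=
  v1^* * v1 + v2^* * v2 + v3^* * v3 + v1^* * a * v2 + v2^* * a^* * v1
  + v1^* * b * v3 + v3^* * b^* * v1 + v2^* * c * v3 + v3^* * c^* * v2.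
Definition rm (v1 v2 a1 a2 w1 w2 : R) := (v1*a1 + v2*a2)*w1 - (v1*a2 - v2*a1)*w2.
Definition Q3 (a1 a2 b1 b2 c1 c2 x1 x2 y1 y2 z1 z2 : R) :=
  x1^+2+x2^+2+y1^+2+y2^+2+z1^+2+z2^+2 + 2*(rm x1 x2 a1 a2 y1 y2 + rm x1 x2 b1 b2 z1 z2 + rm y1 y2 c1 c2 z1 z2).
Lemma QcE a1 a2 b1 b2 c1 c2 x1 x2 y1 y2 z1 z2 :
  complex.Re (Qc (a1+i*a2) (b1+i*b2) (c1+i*c2) (x1+i*x2) (y1+i*y2) (z1+i*z2)) =
  Q3 a1 a2 b1 b2 c1 c2 x1 x2 y1 y2 z1 z2.
Proof. rewrite /Qc /Q3 /rm. simpc. rewrite /=. ring. Qed.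

Lemma lra_test (x y z : R) : x*y = 0 -> z + x*y*3 = z.
Proof. move=> h. lra. Qed.

Lemma unit_dir (u1 u2 : R) : exists e1 e2, e1^+2+e2^+2 = 1 /\ u1*e1 - u2*e2 = 0.
Proof.
have [nu0|nun0] := eqVneq (u1^+2+u2^+2) 0.
  have h1 : u1 = 0 by nra.
  have h2 : u2 = 0 by nra.
  exists 1, 0; split; [ring| rewrite h1 h2; ring].
set n := Num.sqrt (u1^+2+u2^+2).
have hn : n^+2 = u1^+2+u2^+2 by rewrite /n sqr_sqrtr //; nra.
have hn0 : n != 0 by apply/eqP => h; move: hn; rewrite h => /esym; apply/eqP; rewrite expr0n /=.
exists (u2/n), (u1/n); split.
  have -> : (u2/n)^+2 + (u1/n)^+2 = (u1^+2+u2^+2)/(n^+2) by field.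
  by rewrite hn divff.
field; done.
Qed.

Lemma core3 (a b c : C) :
 (forall v1 v2 v3, 0 <= complex.Re (Qc a b c v1 v2 v3)) ->
 exists t (x1 x2 y1 y2 : C), [/\ 0 <= t <= 1, sqmod x1 = 1, sqmod x2 = 1, sqmod y1 <= 1 &
   [/\ sqmod y2 <= 1, a = t%:C * x1^* + (1-t)%:C * x2^*, b = t%:C * y1 + (1-t)%:C * y2 &
       c = t%:C * x1 * y1 + (1-t)%:C * x2 * y2]].
Proof.
case: a => a1 a2; case: b => b1 b2; case: c => c1 c2 hQc.
have hQ : forall x1 x2 y1 y2 z1 z2, 0 <= Q3 a1 a2 b1 b2 c1 c2 x1 x2 y1 y2 z1 z2.
  by move=> *; rewrite -QcE.
rewrite /sqmod.
have hna : a1^+2 + a2^+2 <= 1.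
  have := hQ (-a1) (-a2) 1 0 0 0; rewrite /Q3 /rm; nra.
have hnb : b1^+2 + b2^+2 <= 1.
  have := hQ (-b1) (-b2) 0 0 1 0; rewrite /Q3 /rm; nra.
have [na1|na1] := eqVneq (a1^+2 + a2^+2) 1.
  set g1 := b1 - (a1*c1 - a2*c2); set g2 := b2 - (a1*c2 + a2*c1).
  have hg : g1^+2 + g2^+2 = 0.
    apply/eqP; apply/negPn/negP => hng.
    have hpos : 0 < g1^+2 + g2^+2 by rewrite lt_neqAle eq_sym hng /=; nra.
    set lam := (g1^+2 + g2^+2)^-1.
    have hl : lam * (g1^+2 + g2^+2) = 1 by rewrite /lam mulVf // gt_eqF.
    have := hQ (-(lam*g1)) (-(lam*g2)) (lam*(a1*g1+a2*g2)) (lam*(a1*g2 - a2*g1)) 1 0.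
    have -> : Q3 a1 a2 b1 b2 c1 c2 (-(lam*g1)) (-(lam*g2)) (lam*(a1*g1+a2*g2)) (lam*(a1*g2 - a2*g1)) 1 0
       = 1 - 2*lam*(g1^+2+g2^+2) + lam^+2*(g1^+2+g2^+2)*(1 - (a1^+2+a2^+2)).
      by rewrite /Q3 /rm /g1 /g2; ring.
    rewrite na1 subrr mulr0 addr0 -mulrA hl; lra.
  have g10 : g1 = 0 by nra.
  have g20 : g2 = 0 by nra.
  have hb1 : b1 = a1*c1 - a2*c2 by move: g10; rewrite /g1; lra.
  have hb2 : b2 = a1*c2 + a2*c1 by move: g20; rewrite /g2; lra.
  exists 1, (a1 -i* a2), (a1 -i* a2), (b1 +i* b2), (b1 +i* b2).
  split => //=; first lra; first nra; first nra.
  split => //; simpc; rewrite /=.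
  - apply/eqP; rewrite eq_complex /=; apply/andP; split; apply/eqP; ring.
  - apply/eqP; rewrite eq_complex /=; apply/andP; split; apply/eqP; ring.
  - have h := congr1 (fun z => z * c1) na1; have h' := congr1 (fun z => z * c2) na1.
    rewrite /= in h h'.
    apply/eqP; rewrite eq_complex /=; apply/andP; split; apply/eqP; rewrite hb1 hb2; lra.
have hD : 0 < 1 - (a1^+2 + a2^+2) by rewrite subr_gt0 lt_neqAle na1 hna.
have hD0 : 1 - (a1^+2 + a2^+2) != 0 by rewrite gt_eqF.
have [p1 [p2 [q1 [q2 [hb1 hb2 hc1 hc2]]]]] : exists p1 p2 q1 q2,
   [/\ b1 = p1 + (q1*a1 - q2*a2), b2 = p2 + (q1*a2 + q2*a1),
       c1 = (p1*a1 + p2*a2) + q1 & c2 = (p2*a1 - p1*a2) + q2].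
  exists ((b1 - (a1*c1 - a2*c2))/(1 - (a1^+2 + a2^+2))),
         ((b2 - (a1*c2 + a2*c1))/(1 - (a1^+2 + a2^+2))),
         ((c1 - (a1*b1 + a2*b2))/(1 - (a1^+2 + a2^+2))),
         ((c2 - (a1*b2 - a2*b1))/(1 - (a1^+2 + a2^+2))).
  by split; field.
subst b1 b2 c1 c2.
set L := 1 - (p1^+2+p2^+2) - (q1^+2+q2^+2) - 2*((p1*q1+p2*q2)*a1 - (p1*q2-p2*q1)*a2).
have hL : 0 <= L.
  have := hQ (-p1) (-p2) (-q1) (-q2) 1 0.
  have -> : Q3 a1 a2 (p1 + (q1 * a1 - q2 * a2)) (p2 + (q1 * a2 + q2 * a1))
    (p1 * a1 + p2 * a2 + q1) (p2 * a1 - p1 * a2 + q2) (-p1) (-p2) (-q1) (-q2) 1 0 = L.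
    by rewrite /Q3 /rm /L; ring.
  done.
have [e1 [e2 [he hue]]] := @unit_dir (p1*q1+p2*q2) (p1*q2-p2*q1).
have [t [s1 [s2 [ht hw1 hw2 hts]]]] := @chord a1 a2 e1 e2 hna he.
set w11 := a1 + s1*e1; set w12 := a2 + s1*e2; set w21 := a1 + s2*e1; set w22 := a2 + s2*e2.
have hbeta : forall s, (a1 + s*e1)^+2 + (a2 + s*e2)^+2 = 1 ->
   (p1 + (q1*(a1+s*e1) - q2*(a2+s*e2)))^+2 + (p2 + (q1*(a2+s*e2) + q2*(a1+s*e1)))^+2 <= 1.
  move=> s hs.
  have id : (p1 + (q1*(a1+s*e1) - q2*(a2+s*e2)))^+2 + (p2 + (q1*(a2+s*e2) + q2*(a1+s*e1)))^+2 - 1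
     = (q1^+2+q2^+2)*((a1 + s*e1)^+2 + (a2 + s*e2)^+2 - 1)
       + 2*s*((p1*q1+p2*q2)*e1 - (p1*q2-p2*q1)*e2) - L by rewrite /L; ring.
  move: id; rewrite hs hue subrr mulr0 mulr0 add0r; lra.
exists t, (w11 -i* w12), (w21 -i* w22),
  ((p1 + (q1*w11 - q2*w12)) +i* (p2 + (q1*w12 + q2*w11))),
  ((p1 + (q1*w21 - q2*w22)) +i* (p2 + (q1*w22 + q2*w21))).
have hw1' : w11^+2 + w12^+2 = 1 by [].
have hw2' : w21^+2 + w22^+2 = 1 by [].
split => //=.
- lra.
- lra.
- exact: hbeta.
split => /=.
- exact: hbeta.
- have h1 := congr1 (fun z => z * e1) hts; have h2 := congr1 (fun z => z * e2) hts.
  rewrite /= in h1 h2.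
  simpc; apply/eqP; rewrite eq_complex /=; apply/andP; split; apply/eqP; rewrite /w11 /w12 /w21 /w22; lra.
- have h1 := congr1 (fun z => z * e1) hts; have h2 := congr1 (fun z => z * e2) hts.
  rewrite /= in h1 h2.
  have h3 := congr1 (fun z => z * (q1*e1)) hts; have h4 := congr1 (fun z => z * (q2*e2)) hts.
  have h5 := congr1 (fun z => z * (q1*e2)) hts; have h6 := congr1 (fun z => z * (q2*e1)) hts.
  rewrite /= in h3 h4 h5 h6.
  simpc; apply/eqP; rewrite eq_complex /=; apply/andP; split; apply/eqP; rewrite /w11 /w12 /w21 /w22; lra.
- move: hw1' hw2'; rewrite /w11 /w12 /w21 /w22 => hw1' hw2'.
  have k1 := congr1 (fun z => z * (t*q1)) hw1'; have k2 := congr1 (fun z => z * (t*q2)) hw1'.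
  have k3 := congr1 (fun z => z * ((1-t)*q1)) hw2'; have k4 := congr1 (fun z => z * ((1-t)*q2)) hw2'.
  have m1 := congr1 (fun z => z * (p1*e1)) hts; have m2 := congr1 (fun z => z * (p2*e2)) hts.
  have m3 := congr1 (fun z => z * (p1*e2)) hts; have m4 := congr1 (fun z => z * (p2*e1)) hts.
  rewrite /= in k1 k2 k3 k4 m1 m2 m3 m4.
  simpc; apply/eqP; rewrite eq_complex /=; apply/andP; split; apply/eqP; rewrite /w11 /w12 /w21 /w22; lra.
Qed.
Definition Good n (A : 'M[C]_n) (d : 'I_n -> R) :=
  exists m (p : 'I_m -> R) (psi : 'I_m -> 'cV[C]_n),
    pure_decomposition A p psi /\ forall k i, sqmod (psi k i ord0) = d i.

Lemma split_l m1 m2 (i : 'I_m1) : split (lshift m2 i) = inl i.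
Proof. exact: (unsplitK (inl i)). Qed.
Lemma split_r m1 m2 (i : 'I_m2) : split (rshift m1 i) = inr i.
Proof. exact: (unsplitK (inr i)). Qed.

Lemma rcM (x y : R) : (x * y)%:C = x%:C * y%:C :> C.
Proof. by apply/eqP; rewrite eq_complex /= !mulr0 !mul0r subr0 addr0 !eqxx. Qed.
Lemma rcB (x y : R) : (x - y)%:C = x%:C - y%:C :> C.
Proof. by apply/eqP; rewrite eq_complex /= subr0 !eqxx. Qed.
Lemma rc1 : (1 : R)%:C = 1 :> C. Proof. by []. Qed.
Lemma rc0 : (0 : R)%:C = 0 :> C. Proof. by []. Qed.

Lemma good_mix n (A B : 'M[C]_n) d (t : R) : Good A d -> Good B d -> 0 <= t <= 1 ->
  Good (t%:C *: A + (1-t)%:C *: B) d.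
Proof.
move=> [m1 [p1 [psi1 [[hp1 [hs1 [hu1 hA]] hd1]]]]] [m2 [p2 [psi2 [[hp2 [hs2 [hu2 hB]] hd2]]]]] /andP [t0 t1].
have [->|tn0] := eqVneq t 0.
  by rewrite rc0 scale0r add0r subr0 rc1 scale1r; exists m2, p2, psi2.
have [->|tn1] := eqVneq t 1.
  by rewrite subrr rc0 scale0r addr0 rc1 scale1r; exists m1, p1, psi1.
have tp : 0 < t by rewrite lt_neqAle eq_sym tn0.
have tq : 0 < 1 - t by rewrite subr_gt0 lt_neqAle tn1.
exists (m1 + m2)%N, (fun k => match split k with inl i => t * p1 i | inr j => (1-t) * p2 j end),
  (fun k => match split k with inl i => psi1 i | inr j => psi2 j end).
split; last by move=> k i; case: (split k).
split; first by move=> k; case: (split k) => i; apply: mulr_gt0.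
split.
  rewrite big_split_ord /=.
  under eq_bigr do rewrite split_l.
  under [X in _ + X]eq_bigr do rewrite split_r.
  by rewrite -!mulr_sumr hs1 hs2 !mulr1 addrC subrK.
split; first by move=> k; case: (split k).
rewrite hA hB !scaler_sumr big_split_ord /=; congr (_ + _); apply: eq_bigr => i _.
  by rewrite split_l scalerA rcM.
by rewrite split_r scalerA rcM.
Qed.

Lemma good_pure n (psi : 'cV[C]_n) d : unit_vector psi -> (forall i, sqmod (psi i ord0) = d i) ->
  Good (psi *m adjmx psi) d.
Proof.
move=> hu hd; exists 1%N, (fun _ => 1), (fun _ => psi); split => //.
split => //; split; first by rewrite big_ord1.
split => //.
by rewrite big_ord1 rc1 scale1r.
Qed.

Lemma Re_sum m (F : 'I_m -> C) : complex.Re (\sum_(k < m) F k) = \sum_(k < m) complex.Re (F k).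
Proof.
elim: m F => [|m IH] F; first by rewrite !big_ord0.
by rewrite !big_ord_recr /= -IH; case: (\sum_(i < m) F (widen_ord (leqnSn m) i)) => ? ?; case: (F ord_max).
Qed.

Lemma sqmod_ge0 (z : C) : 0 <= sqmod z.
Proof. rewrite /sqmod; apply: addr_ge0; apply: sqr_ge0. Qed.

Lemma Re_mulJ (r : R) (z : C) : complex.Re (r%:C * (z * z^*)) = r * sqmod z.
Proof. case: z => a b; rewrite /sqmod; simpc; rewrite /=; ring. Qed.

Lemma simplex_comb n m (p : 'I_m -> R) (x : 'I_m -> 'rV[R]_n) :
  (forall k, 0 <= p k) -> \sum_k p k = 1 -> (forall k, in_simplex (x k)) ->
  in_simplex (\sum_k p k *: x k).
Proof.
move=> hp hs hx; split.
  move=> i; rewrite summxE; apply: sumr_ge0 => k _; rewrite mxE; apply: mulr_ge0 => //.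
  by case: (hx k) => h _; apply: h.
under eq_bigr do rewrite summxE.
rewrite exchange_big /= -[RHS]hs; apply: eq_bigr => k _.
under eq_bigr do rewrite mxE.
by rewrite -mulr_sumr; case: (hx k) => _ ->; rewrite mulr1.
Qed.

Lemma jensen n (f : 'rV[R]_n -> R)
  (hc : forall (x y : 'rV[R]_n) (t : R), in_simplex x -> in_simplex y ->
        0 <= t <= 1 -> t * f x + (1 - t) * f y <= f (t *: x + (1 - t) *: y))
  m (p : 'I_m -> R) (x : 'I_m -> 'rV[R]_n) :
  (forall k, 0 <= p k) -> \sum_k p k = 1 -> (forall k, in_simplex (x k)) ->
  \sum_k p k * f (x k) <= f (\sum_k p k *: x k).
Proof.
elim: m p x => [|m IH] p x hp hs hx.
  by move: hs; rewrite big_ord0 => /eqP; rewrite eq_sym oner_eq0.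
move: hs; rewrite !big_ord_recl => hs.
set S := \sum_(i < m) p (lift ord0 i) in hs.
have hS0 : 0 <= S by apply: sumr_ge0 => i _.
have [S0|Sn0] := eqVneq S 0.
  have hz : forall i, p (lift ord0 i) = 0.
    move=> i; move/psumr_eq0P: S0 => h; apply: h => //.
  have -> : \sum_(i < m) p (lift ord0 i) * f (x (lift ord0 i)) = 0.
    by rewrite big1 // => i _; rewrite hz mul0r.
  have -> : \sum_(i < m) p (lift ord0 i) *: x (lift ord0 i) = 0.
    by rewrite big1 // => i _; rewrite hz scale0r.
  have -> : p ord0 = 1 by rewrite -hs S0 addr0.
  by rewrite !addr0 mul1r scale1r.
have Sp : 0 < S by rewrite lt_neqAle eq_sym Sn0.
set p' := fun i => p (lift ord0 i) / S.
set y := \sum_(i < m) p' i *: x (lift ord0 i).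
have hp' : forall i, 0 <= p' i by move=> i; apply: divr_ge0.
have hs' : \sum_i p' i = 1 by rewrite /p' -mulr_suml divff.
have hy : in_simplex y by apply: simplex_comb.
have IH' := IH p' (fun i => x (lift ord0 i)) hp' hs' (fun i => hx _).
have hS1 : 1 - p ord0 = S by lra.
have e1 : \sum_(i < m) p (lift ord0 i) *: x (lift ord0 i) = (1 - p ord0) *: y.
  rewrite hS1 /y scaler_sumr; apply: eq_bigr => i _.
  rewrite scalerA; congr (_ *: _); rewrite /p'; by field.
have e2 : \sum_(i < m) p (lift ord0 i) * f (x (lift ord0 i)) = (1 - p ord0) * \sum_i p' i * f (x (lift ord0 i)).
  rewrite hS1 mulr_sumr; apply: eq_bigr => i _.
  rewrite /p'; by field.
rewrite e1 e2.
have h01 : 0 <= p ord0 <= 1 by rewrite hp /= -hs lerDl.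
apply: le_trans (hc _ _ _ (hx ord0) hy h01).
rewrite lerD2l; apply: ler_wpM2l => //; lra.
Qed.

Lemma diag_decomp n (rho : 'M[C]_n) m (p : 'I_m -> R) psi : pure_decomposition rho p psi ->
  diag_vec rho = \sum_k p k *: \row_(i < n) sqmod (psi k i ord0).
Proof.
move=> [_ [_ [_ hr]]]; apply/matrixP => i j; rewrite !mxE summxE hr summxE Re_sum.
apply: eq_bigr => k _; rewrite !mxE big_ord1 !mxE -Re_mulJ.
by rewrite /= mulrA.
Qed.

Lemma part1 n (f : 'rV[R]_n -> R) (hf : F_sc f) (rho : 'M[C]_n) m (p : 'I_m -> R) psi :
  pure_decomposition rho p psi -> avg_coh f p psi <= f (diag_vec rho).
Proof.
move=> hd; rewrite (diag_decomp hd) /avg_coh /coh.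
case: hf => _ [_ hc]; case: hd => hp [hs [hu _]].
apply: jensen => //; first by move=> k; apply: ltW.
move=> k; split; first by move=> i; rewrite mxE; apply: sqmod_ge0.
by under eq_bigr do rewrite mxE; apply: hu.
Qed.

Lemma part2 n (f : 'rV[R]_n -> R) (rho : 'M[C]_n) : Good rho (fun i => complex.Re (rho i i)) ->
  exists m (p : 'I_m -> R) (psi : 'I_m -> 'cV[C]_n),
      pure_decomposition rho p psi /\ avg_coh f p psi = f (diag_vec rho).
Proof.
move=> [m [p [psi [hd hq]]]]; exists m, p, psi; split => //.
rewrite /avg_coh /coh.
have hrow : forall k, \row_(i < n) sqmod (psi k i ord0) = diag_vec rho.
  by move=> k; apply/matrixP => i j; rewrite !mxE; exact: hq.
under eq_bigr do rewrite hrow.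
by rewrite -mulr_suml; case: hd => _ [-> _]; rewrite mul1r.
Qed.
Definition i0 : 'I_3 := @Ordinal 3 0 isT.
Definition i1 : 'I_3 := @Ordinal 3 1 isT.
Definition i2 : 'I_3 := @Ordinal 3 2 isT.
Lemma ord3P (i : 'I_3) : i = i0 \/ i = i1 \/ i = i2.
Proof. case: i => [[|[|[|k]]] hk]; [left|right;left|right;right|by []]; exact: val_inj. Qed.
Lemma sum3 (V : nmodType) (F : 'I_3 -> V) : \sum_(i < 3) F i = F i0 + F i1 + F i2.
Proof.
rewrite !big_ord_recl big_ord0 addr0 addrA; congr (F _ + F _ + F _); exact: val_inj.
Qed.
Lemma quad n (w : 'cV[C]_n) (rho : 'M[C]_n) :
  (adjmx w *m rho *m w) ord0 ord0 = \sum_i \sum_j (w i ord0)^* * rho i j * w j ord0.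
Proof.
rewrite mxE; under eq_bigr do rewrite mxE mulr_suml.
rewrite exchange_big; apply: eq_bigr => i _; apply: eq_bigr => j _.
by rewrite /adjmx !mxE.
Qed.
Definition col3 (x y z : C) : 'cV[C]_3 :=
  \col_i (if i == i0 then x else if i == i1 then y else z).
Lemma col3E x y z : [/\ col3 x y z i0 ord0 = x, col3 x y z i1 ord0 = y & col3 x y z i2 ord0 = z].
Proof. by rewrite /col3 !mxE. Qed.
Lemma col3E0 x y z : col3 x y z i0 ord0 = x. Proof. by rewrite /col3 !mxE. Qed.
Lemma col3E1 x y z : col3 x y z i1 ord0 = y. Proof. by rewrite /col3 !mxE. Qed.
Lemma col3E2 x y z : col3 x y z i2 ord0 = z. Proof. by rewrite /col3 !mxE. Qed.
End Dev.

Section N3.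
Variable R : realType.
Local Notation C := (R[i]).

Lemma dm_herm n (rho : 'M[C]_n) : density_matrix rho -> forall i j, rho j i = (rho i j)^*.
Proof.
move=> [h _] i j; have := congr1 (fun M : 'M[C]_n => M j i) h; rewrite /adjmx !mxE => <-.
done.
Qed.

Lemma dm_diag n (rho : 'M[C]_n) : density_matrix rho -> forall i, rho i i = (complex.Re (rho i i))%:C.
Proof.
move=> hd i; have := dm_herm hd i i; case: (rho i i) => a b /eqP.
rewrite eq_complex /= => /andP [_ /eqP hb].
have -> : b = 0 by lra.
by [].
Qed.

Lemma dm_psd n (rho : 'M[C]_n) : density_matrix rho -> forall w : 'cV[C]_n,
  0 <= complex.Re (\sum_i \sum_j (w i ord0)^* * rho i j * w j ord0).
Proof.
move=> [_ [h _]] w; have := h w; rewrite quad lecE => /andP [_]; done.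
Qed.

Lemma dm_tr n (rho : 'M[C]_n) : density_matrix rho -> \sum_i complex.Re (rho i i) = 1.
Proof. by move=> [_ [_ h]]; rewrite -Re_sum; move: h; rewrite /mxtrace => ->. Qed.


Definition Q3r (d0 d1 d2 A1 A2 B1 B2 C1 C2 x1 x2 y1 y2 z1 z2 : R) :=
  d0*(x1^+2+x2^+2) + d1*(y1^+2+y2^+2) + d2*(z1^+2+z2^+2)
  + 2*(rm x1 x2 A1 A2 y1 y2 + rm x1 x2 B1 B2 z1 z2 + rm y1 y2 C1 C2 z1 z2).

Lemma psd3r (rho : 'M[C]_3) (hd : density_matrix rho) A1 A2 B1 B2 C1 C2 :
  rho i0 i1 = A1 +i* A2 -> rho i0 i2 = B1 +i* B2 -> rho i1 i2 = C1 +i* C2 ->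
  forall x1 x2 y1 y2 z1 z2, 0 <= Q3r (complex.Re (rho i0 i0)) (complex.Re (rho i1 i1))
     (complex.Re (rho i2 i2)) A1 A2 B1 B2 C1 C2 x1 x2 y1 y2 z1 z2.
Proof.
move=> hA hB hC x1 x2 y1 y2 z1 z2.
have := dm_psd hd (col3 (x1 +i* x2) (y1 +i* y2) (z1 +i* z2)).
rewrite !sum3 !col3E0 !col3E1 !col3E2.
rewrite (dm_herm hd i0 i1) (dm_herm hd i0 i2) (dm_herm hd i1 i2) hA hB hC.
rewrite (dm_diag hd i0) (dm_diag hd i1) (dm_diag hd i2).
move: (complex.Re (rho i0 i0)) (complex.Re (rho i1 i1)) (complex.Re (rho i2 i2)) => d0 d1 d2.
simpc; rewrite /= /Q3r /rm.
lra.
Qed.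

Lemma disk (y : C) : sqmod y <= 1 -> exists r (w1 w2 : C),
  [/\ 0 <= r <= 1, sqmod w1 = 1, sqmod w2 = 1 & y = r%:C * w1 + (1-r)%:C * w2].
Proof.
case: y => y1 y2; rewrite /sqmod /= => hy.
have he : (1:R)^+2 + 0^+2 = 1 by ring.
have [r [s1 [s2 [hr h1 h2 hrs]]]] := chord hy he.
exists r, ((y1 + s1*1) +i* (y2 + s1*0)), ((y1 + s2*1) +i* (y2 + s2*0)); split => //.
simpc; apply/eqP; rewrite eq_complex /=; apply/andP; split; apply/eqP; lra.
Qed.

Lemma lamK (d K : R) : 0 <= d -> 0 <= K -> (forall lam, 0 <= d - 2*lam*K) -> K = 0.
Proof.
move=> hd hK h; apply/eqP; apply/negPn/negP => hK0.
have hKp : 0 < K by rewrite lt_neqAle eq_sym hK0.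
have := h ((d+1)/K).
have -> : d - 2 * ((d + 1) / K) * K = - d - 2 by field; rewrite gt_eqF.
lra.
Qed.

Lemma Q2zero (d0 d1 A1 A2 : R) :
  (forall x1 x2 y1 y2, 0 <= d0*(x1^+2+x2^+2) + d1*(y1^+2+y2^+2) + 2*rm x1 x2 A1 A2 y1 y2) ->
  (d0 = 0 \/ d1 = 0) -> A1 = 0 /\ A2 = 0.
Proof.
move=> h hz.
have hd0 : 0 <= d0 by have := h 1 0 0 0; rewrite /rm; lra.
have hd1 : 0 <= d1 by have := h 0 0 1 0; rewrite /rm; lra.
have hK : 0 <= A1^+2 + A2^+2 by nra.
suff K0 : A1^+2 + A2^+2 = 0 by split; nra.
case: hz => hz.
  apply: (@lamK d1) => // lam; have := h (-(lam*A1)) (-(lam*A2)) 1 0; rewrite /rm hz; lra.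
apply: (@lamK d0) => // lam; have := h 1 0 (-(lam*A1)) (lam*A2); rewrite /rm hz; lra.
Qed.

Lemma inv_sq_le1 (s : R) : 0 <= 1 - s^+2 * (s^-1)^+2.
Proof.
have [->|sn0] := eqVneq s 0; first by rewrite invr0 expr0n /= mul0r subr0.
by rewrite -exprMn mulfV // expr1n subrr.
Qed.

Lemma recon (s0 s1 A1 A2 : R) : (s0 = 0 \/ s1 = 0 -> A1 = 0 /\ A2 = 0) ->
  A1 +i* A2 = (s0*s1)%:C * ((A1 * (s0^-1*s1^-1)) +i* (A2*(s0^-1*s1^-1))).
Proof.
move=> hz.
have [e0|n0] := eqVneq s0 0.
  case: (hz (or_introl e0)) => -> ->; rewrite e0; simpc.
  apply/eqP; rewrite eq_complex /=; apply/andP; split; apply/eqP; ring.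
have [e1|n1] := eqVneq s1 0.
  case: (hz (or_intror e1)) => -> ->; rewrite e1; simpc.
  apply/eqP; rewrite eq_complex /=; apply/andP; split; apply/eqP; ring.
simpc; apply/eqP; rewrite eq_complex /=; apply/andP; split; apply/eqP; field; by apply/andP.
Qed.

Definition Mk (s0 s1 s2 : R) (a b c : C) : 'M[C]_3 := \matrix_(i, j)
  if i == i0 then (if j == i0 then (s0^+2)%:C else if j == i1 then (s0*s1)%:C * a else (s0*s2)%:C * b)
  else if i == i1 then (if j == i0 then (s0*s1)%:C * a^* else if j == i1 then (s1^+2)%:C else (s1*s2)%:C * c)
  else (if j == i0 then (s0*s2)%:C * b^* else if j == i1 then (s1*s2)%:C * c^* else (s2^+2)%:C).

Lemma Mk_lin s0 s1 s2 (t : R) a1 a2 b1 b2 c1 c2 :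
  Mk s0 s1 s2 (t%:C * a1 + (1-t)%:C * a2) (t%:C * b1 + (1-t)%:C * b2) (t%:C * c1 + (1-t)%:C * c2)
  = t%:C *: Mk s0 s1 s2 a1 b1 c1 + (1-t)%:C *: Mk s0 s1 s2 a2 b2 c2.
Proof.
apply/matrixP => i j; rewrite !mxE.
case: a1 => ? ?; case: a2 => ? ?; case: b1 => ? ?; case: b2 => ? ?; case: c1 => ? ?; case: c2 => ? ?.
case: (ord3P i) => [->|[->|->]]; case: (ord3P j) => [->|[->|->]] /=;
  simpc; apply/eqP; rewrite eq_complex /=; apply/andP; split; apply/eqP; ring.
Qed.

End N3.

Section N3b.
Variable R : realType.
Local Notation C := (R[i]).

Lemma conjRM (r : R) (z : C) : (r%:C * z)^* = r%:C * z^*.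
Proof. case: z => ? ?; simpc; apply/eqP; rewrite eq_complex /=; apply/andP; split; apply/eqP; ring. Qed.

Definition psi3 (s0 s1 s2 : R) (x w : C) : 'cV[C]_3 := col3 s0%:C (s1%:C * x) (s2%:C * w^*).

Lemma Mk_pure s0 s1 s2 (x w : C) : sqmod x = 1 -> sqmod w = 1 ->
  Mk s0 s1 s2 x^* w (x*w) = psi3 s0 s1 s2 x w *m adjmx (psi3 s0 s1 s2 x w).
Proof.
case: x => x1 x2; case: w => w1 w2; rewrite /sqmod /= => hx hw.
have h1 := congr1 (fun z => z * s1^+2) hx; have h2 := congr1 (fun z => z * s2^+2) hw.
rewrite /= in h1 h2.
apply/matrixP => i j; rewrite !mxE big_ord1 /adjmx /psi3 !mxE.
case: (ord3P i) => [->|[->|->]]; case: (ord3P j) => [->|[->|->]];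
  rewrite ?col3E0 ?col3E1 ?col3E2 /=;
  simpc; apply/eqP; rewrite eq_complex /=; apply/andP; split; apply/eqP; lra.
Qed.

Lemma rho_Mk (rho : 'M[C]_3) (hd : density_matrix rho) s0 s1 s2 a b c :
  s0^+2 = complex.Re (rho i0 i0) -> s1^+2 = complex.Re (rho i1 i1) -> s2^+2 = complex.Re (rho i2 i2) ->
  rho i0 i1 = (s0*s1)%:C * a -> rho i0 i2 = (s0*s2)%:C * b -> rho i1 i2 = (s1*s2)%:C * c ->
  rho = Mk s0 s1 s2 a b c.
Proof.
move=> e0 e1 e2 ea eb ec.
have d0 : rho i0 i0 = (s0^+2)%:C by rewrite (dm_diag hd i0) e0.
have d1 : rho i1 i1 = (s1^+2)%:C by rewrite (dm_diag hd i1) e1.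
have d2 : rho i2 i2 = (s2^+2)%:C by rewrite (dm_diag hd i2) e2.
have h10 : rho i1 i0 = (s0*s1)%:C * a^* by rewrite (dm_herm hd i0 i1) ea conjRM.
have h20 : rho i2 i0 = (s0*s2)%:C * b^* by rewrite (dm_herm hd i0 i2) eb conjRM.
have h21 : rho i2 i1 = (s1*s2)%:C * c^* by rewrite (dm_herm hd i1 i2) ec conjRM.
apply/matrixP => i j; rewrite !mxE.
by case: (ord3P i) => [->|[->|->]]; case: (ord3P j) => [->|[->|->]] /=.
Qed.

End N3b.

Section N3c.
Variable R : realType.
Local Notation C := (R[i]).

Lemma Q3_scale (s0 s1 s2 A1 A2 B1 B2 C1 C2 x1 x2 y1 y2 z1 z2 : R) :
  0 <= Q3r (s0^+2) (s1^+2) (s2^+2) A1 A2 B1 B2 C1 C2 (x1*s0^-1) (x2*s0^-1) (y1*s1^-1) (y2*s1^-1)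
         (z1*s2^-1) (z2*s2^-1) ->
  0 <= Q3 (A1*(s0^-1*s1^-1)) (A2*(s0^-1*s1^-1)) (B1*(s0^-1*s2^-1)) (B2*(s0^-1*s2^-1))
          (C1*(s1^-1*s2^-1)) (C2*(s1^-1*s2^-1)) x1 x2 y1 y2 z1 z2.
Proof.
move=> h.
have e : Q3 (A1*(s0^-1*s1^-1)) (A2*(s0^-1*s1^-1)) (B1*(s0^-1*s2^-1)) (B2*(s0^-1*s2^-1))
          (C1*(s1^-1*s2^-1)) (C2*(s1^-1*s2^-1)) x1 x2 y1 y2 z1 z2 =
   Q3r (s0^+2) (s1^+2) (s2^+2) A1 A2 B1 B2 C1 C2 (x1*s0^-1) (x2*s0^-1) (y1*s1^-1) (y2*s1^-1)
         (z1*s2^-1) (z2*s2^-1) + (x1^+2+x2^+2)*(1 - s0^+2*(s0^-1)^+2)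
     + (y1^+2+y2^+2)*(1 - s1^+2*(s1^-1)^+2) + (z1^+2+z2^+2)*(1 - s2^+2*(s2^-1)^+2).
  by rewrite /Q3 /Q3r /rm; ring.
rewrite e; repeat apply: addr_ge0 => //; apply: mulr_ge0; (try nra); exact: inv_sq_le1.
Qed.

Lemma sqmodRM (r : R) (z : C) : sqmod (r%:C * z) = r^+2 * sqmod z.
Proof. case: z => ? ?; rewrite /sqmod; simpc; rewrite /=; ring. Qed.
Lemma sqmodJ (z : C) : sqmod z^* = sqmod z.
Proof. case: z => ? ?; rewrite /sqmod /=; ring. Qed.
Lemma sqmodR (r : R) : sqmod r%:C = r^+2.
Proof. rewrite /sqmod /=; ring. Qed.

Lemma Mk_mixy s0 s1 s2 (x : C) (r : R) (w1 w2 : C) :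
  Mk s0 s1 s2 x^* (r%:C * w1 + (1-r)%:C * w2) (x * (r%:C * w1 + (1-r)%:C * w2)) =
  r%:C *: Mk s0 s1 s2 x^* w1 (x*w1) + (1-r)%:C *: Mk s0 s1 s2 x^* w2 (x*w2).
Proof.
rewrite -Mk_lin; congr Mk; rewrite rcB rc1; ring.
Qed.

Lemma good_pure3 (rho : 'M[C]_3) (hd : density_matrix rho) s0 s1 s2 (x w : C) :
  s0^+2 = complex.Re (rho i0 i0) -> s1^+2 = complex.Re (rho i1 i1) -> s2^+2 = complex.Re (rho i2 i2) ->
  sqmod x = 1 -> sqmod w = 1 -> Good (Mk s0 s1 s2 x^* w (x*w)) (fun i => complex.Re (rho i i)).
Proof.
move=> e0 e1 e2 hx hw; rewrite Mk_pure //; apply: good_pure.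
  rewrite /unit_vector sum3 /psi3 col3E0 col3E1 col3E2 sqmodR !sqmodRM sqmodJ hx hw !mulr1.
  by rewrite e0 e1 e2 -(dm_tr hd) sum3.
move=> i; case: (ord3P i) => [->|[->|->]]; rewrite /psi3 ?col3E0 ?col3E1 ?col3E2 ?sqmodR ?sqmodRM ?sqmodJ ?hx ?hw ?mulr1 //.
Qed.

Lemma good3 (rho : 'M[C]_3) (hd : density_matrix rho) : Good rho (fun i => complex.Re (rho i i)).
Proof.
case hA : (rho i0 i1) => [A1 A2]; case hB : (rho i0 i2) => [B1 B2]; case hC : (rho i1 i2) => [C1 C2].
have hQ := psd3r hd hA hB hC.
set d0 := complex.Re (rho i0 i0) in hQ *.
set d1 := complex.Re (rho i1 i1) in hQ *.
set d2 := complex.Re (rho i2 i2) in hQ *.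
have hd0 : 0 <= d0 by have := hQ 1 0 0 0 0 0; rewrite /Q3r /rm; lra.
have hd1 : 0 <= d1 by have := hQ 0 0 1 0 0 0; rewrite /Q3r /rm; lra.
have hd2 : 0 <= d2 by have := hQ 0 0 0 0 1 0; rewrite /Q3r /rm; lra.
have z01 : d0 = 0 \/ d1 = 0 -> A1 = 0 /\ A2 = 0.
  apply: Q2zero => x1 x2 y1 y2; have := hQ x1 x2 y1 y2 0 0; rewrite /Q3r /rm; lra.
have z02 : d0 = 0 \/ d2 = 0 -> B1 = 0 /\ B2 = 0.
  apply: Q2zero => x1 x2 y1 y2; have := hQ x1 x2 0 0 y1 y2; rewrite /Q3r /rm; lra.
have z12 : d1 = 0 \/ d2 = 0 -> C1 = 0 /\ C2 = 0.
  apply: Q2zero => x1 x2 y1 y2; have := hQ 0 0 x1 x2 y1 y2; rewrite /Q3r /rm; lra.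
set s0 := Num.sqrt d0; set s1 := Num.sqrt d1; set s2 := Num.sqrt d2.
have hs0 : s0^+2 = d0 by rewrite /s0 sqr_sqrtr.
have hs1 : s1^+2 = d1 by rewrite /s1 sqr_sqrtr.
have hs2 : s2^+2 = d2 by rewrite /s2 sqr_sqrtr.
have sz0 : s0 = 0 -> d0 = 0 by move=> e; rewrite -hs0 e expr0n.
have sz1 : s1 = 0 -> d1 = 0 by move=> e; rewrite -hs1 e expr0n.
have sz2 : s2 = 0 -> d2 = 0 by move=> e; rewrite -hs2 e expr0n.
set a := (A1*(s0^-1*s1^-1)) +i* (A2*(s0^-1*s1^-1)).
set b := (B1*(s0^-1*s2^-1)) +i* (B2*(s0^-1*s2^-1)).
set c := (C1*(s1^-1*s2^-1)) +i* (C2*(s1^-1*s2^-1)).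
have ra : rho i0 i1 = (s0*s1)%:C * a.
  rewrite hA; apply: recon => h; apply: z01; case: h => h; [left; exact: sz0| right; exact: sz1].
have rb : rho i0 i2 = (s0*s2)%:C * b.
  rewrite hB; apply: recon => h; apply: z02; case: h => h; [left; exact: sz0| right; exact: sz2].
have rc : rho i1 i2 = (s1*s2)%:C * c.
  rewrite hC; apply: recon => h; apply: z12; case: h => h; [left; exact: sz1| right; exact: sz2].
have hQc : forall v1 v2 v3, 0 <= complex.Re (Qc a b c v1 v2 v3).
  case=> x1 x2; case=> y1 y2; case=> z1 z2; rewrite /a /b /c QcE; apply: Q3_scale.
  rewrite hs0 hs1 hs2; exact: hQ.
have [t [x1 [x2 [y1 [y2 [ht hx1 hx2 hy1 [hy2 ea eb ec]]]]]]] := core3 hQc.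
have [r1 [w11 [w12 [hr1 hw11 hw12 ey1]]]] := disk hy1.
have [r2 [w21 [w22 [hr2 hw21 hw22 ey2]]]] := disk hy2.
rewrite {1}(rho_Mk hd hs0 hs1 hs2 ra rb rc) ea eb ec -!mulrA Mk_lin.
apply: good_mix => //.
  rewrite ey1 Mk_mixy; apply: good_mix => //; exact: (good_pure3 hd hs0 hs1 hs2).
rewrite ey2 Mk_mixy; apply: good_mix => //; exact: (good_pure3 hd hs0 hs1 hs2).
Qed.

End N3c.

Section N2.
Variable R : realType.
Local Notation C := (R[i]).

Definition j0 : 'I_2 := @Ordinal 2 0 isT.
Definition j1 : 'I_2 := @Ordinal 2 1 isT.
Lemma ord2P (i : 'I_2) : i = j0 \/ i = j1.
Proof. case: i => [[|[|k]] hk]; [left|right|by []]; exact: val_inj. Qed.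
Lemma sum2 (V : nmodType) (F : 'I_2 -> V) : \sum_(i < 2) F i = F j0 + F j1.
Proof.
rewrite !big_ord_recl big_ord0 addr0; congr (F _ + F _); exact: val_inj.
Qed.
Definition col2 (x y : C) : 'cV[C]_2 := \col_i (if i == j0 then x else y).
Lemma col2E0 x y : col2 x y j0 ord0 = x. Proof. by rewrite /col2 !mxE. Qed.
Lemma col2E1 x y : col2 x y j1 ord0 = y. Proof. by rewrite /col2 !mxE. Qed.

Definition Q2r (d0 d1 A1 A2 x1 x2 y1 y2 : R) :=
  d0*(x1^+2+x2^+2) + d1*(y1^+2+y2^+2) + 2*rm x1 x2 A1 A2 y1 y2.

Lemma psd2r (rho : 'M[C]_2) (hd : density_matrix rho) A1 A2 :
  rho j0 j1 = A1 +i* A2 ->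
  forall x1 x2 y1 y2, 0 <= Q2r (complex.Re (rho j0 j0)) (complex.Re (rho j1 j1)) A1 A2 x1 x2 y1 y2.
Proof.
move=> hA x1 x2 y1 y2.
have := dm_psd hd (col2 (x1 +i* x2) (y1 +i* y2)).
rewrite !sum2 !col2E0 !col2E1.
rewrite (dm_herm hd j0 j1) hA.
rewrite (dm_diag hd j0) (dm_diag hd j1).
move: (complex.Re (rho j0 j0)) (complex.Re (rho j1 j1)) => d0 d1.
simpc; rewrite /= /Q2r /rm.
lra.
Qed.

Lemma disk' (y : C) : sqmod y <= 1 -> exists r (w1 w2 : C),
  [/\ 0 <= r <= 1, sqmod w1 = 1, sqmod w2 = 1 & y = r%:C * w1^* + (1-r)%:C * w2^*].
Proof.
case: y => y1 y2; rewrite /sqmod /= => hy.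
have he : (1:R)^+2 + 0^+2 = 1 by ring.
have [r [s1 [s2 [hr h1 h2 hrs]]]] := chord hy he.
exists r, ((y1 + s1*1) -i* (y2 + s1*0)), ((y1 + s2*1) -i* (y2 + s2*0)); split => //=.
- lra.
- lra.
simpc; apply/eqP; rewrite eq_complex /=; apply/andP; split; apply/eqP; lra.
Qed.

Definition Mk2 (s0 s1 : R) (a : C) : 'M[C]_2 := \matrix_(i, j)
  if i == j0 then (if j == j0 then (s0^+2)%:C else (s0*s1)%:C * a)
  else (if j == j0 then (s0*s1)%:C * a^* else (s1^+2)%:C).

Lemma Mk2_lin s0 s1 (t : R) a1 a2 :
  Mk2 s0 s1 (t%:C * a1 + (1-t)%:C * a2) = t%:C *: Mk2 s0 s1 a1 + (1-t)%:C *: Mk2 s0 s1 a2.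
Proof.
apply/matrixP => i j; rewrite !mxE.
case: a1 => ? ?; case: a2 => ? ?.
case: (ord2P i) => ->; case: (ord2P j) => -> /=;
  simpc; apply/eqP; rewrite eq_complex /=; apply/andP; split; apply/eqP; ring.
Qed.

Definition psi2 (s0 s1 : R) (x : C) : 'cV[C]_2 := col2 s0%:C (s1%:C * x).

Lemma Mk2_pure s0 s1 (x : C) : sqmod x = 1 ->
  Mk2 s0 s1 x^* = psi2 s0 s1 x *m adjmx (psi2 s0 s1 x).
Proof.
case: x => x1 x2; rewrite /sqmod /= => hx.
have h1 := congr1 (fun z => z * s1^+2) hx; rewrite /= in h1.
apply/matrixP => i j; rewrite !mxE big_ord1 /adjmx /psi2 !mxE.
case: (ord2P i) => ->; case: (ord2P j) => ->;
  rewrite ?col2E0 ?col2E1 /=;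
  simpc; apply/eqP; rewrite eq_complex /=; apply/andP; split; apply/eqP; lra.
Qed.

Lemma rho_Mk2 (rho : 'M[C]_2) (hd : density_matrix rho) s0 s1 a :
  s0^+2 = complex.Re (rho j0 j0) -> s1^+2 = complex.Re (rho j1 j1) ->
  rho j0 j1 = (s0*s1)%:C * a -> rho = Mk2 s0 s1 a.
Proof.
move=> e0 e1 ea.
have d0 : rho j0 j0 = (s0^+2)%:C by rewrite (dm_diag hd j0) e0.
have d1 : rho j1 j1 = (s1^+2)%:C by rewrite (dm_diag hd j1) e1.
have h10 : rho j1 j0 = (s0*s1)%:C * a^* by rewrite (dm_herm hd j0 j1) ea conjRM.
apply/matrixP => i j; rewrite !mxE.
by case: (ord2P i) => ->; case: (ord2P j) => -> /=.
Qed.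

Lemma good_pure2 (rho : 'M[C]_2) (hd : density_matrix rho) s0 s1 (x : C) :
  s0^+2 = complex.Re (rho j0 j0) -> s1^+2 = complex.Re (rho j1 j1) ->
  sqmod x = 1 -> Good (Mk2 s0 s1 x^*) (fun i => complex.Re (rho i i)).
Proof.
move=> e0 e1 hx; rewrite Mk2_pure //; apply: good_pure.
  rewrite /unit_vector sum2 /psi2 col2E0 col2E1 sqmodR !sqmodRM hx !mulr1.
  by rewrite e0 e1 -(dm_tr hd) sum2.
move=> i; case: (ord2P i) => ->; rewrite /psi2 ?col2E0 ?col2E1 ?sqmodR ?sqmodRM ?hx ?mulr1 //.
Qed.

Lemma good2 (rho : 'M[C]_2) (hd : density_matrix rho) : Good rho (fun i => complex.Re (rho i i)).
Proof.
case hA : (rho j0 j1) => [A1 A2].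
have hQ := psd2r hd hA.
set d0 := complex.Re (rho j0 j0) in hQ *.
set d1 := complex.Re (rho j1 j1) in hQ *.
have hd0 : 0 <= d0 by have := hQ 1 0 0 0; rewrite /Q2r /rm; lra.
have hd1 : 0 <= d1 by have := hQ 0 0 1 0; rewrite /Q2r /rm; lra.
have z01 : d0 = 0 \/ d1 = 0 -> A1 = 0 /\ A2 = 0.
  by apply: Q2zero => x1 x2 y1 y2; have := hQ x1 x2 y1 y2; rewrite /Q2r /rm; lra.
set s0 := Num.sqrt d0; set s1 := Num.sqrt d1.
have hs0 : s0^+2 = d0 by rewrite /s0 sqr_sqrtr.
have hs1 : s1^+2 = d1 by rewrite /s1 sqr_sqrtr.
have sz0 : s0 = 0 -> d0 = 0 by move=> e; rewrite -hs0 e expr0n.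
have sz1 : s1 = 0 -> d1 = 0 by move=> e; rewrite -hs1 e expr0n.
set a := (A1*(s0^-1*s1^-1)) +i* (A2*(s0^-1*s1^-1)).
have ra : rho j0 j1 = (s0*s1)%:C * a.
  rewrite hA; apply: recon => h; apply: z01; case: h => h; [left; exact: sz0| right; exact: sz1].
have ha : sqmod a <= 1.
  rewrite /a /sqmod /=.
  set a1 := A1*(s0^-1*s1^-1); set a2 := A2*(s0^-1*s1^-1).
  have := hQ (-a1*s0^-1) (-a2*s0^-1) (1*s1^-1) (0*s1^-1).
  rewrite -hs0 -hs1 => h.
  have e : 1 - (a1^+2 + a2^+2) = Q2r (s0^+2) (s1^+2) A1 A2 (-a1*s0^-1) (-a2*s0^-1) (1*s1^-1) (0*s1^-1)
       + (a1^+2+a2^+2)*(1 - s0^+2*(s0^-1)^+2) + (1 - s1^+2*(s1^-1)^+2).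
    by rewrite /Q2r /rm /a1 /a2; ring.
  have f0 := inv_sq_le1 s0; have f1 := inv_sq_le1 s1.
  have : 0 <= 1 - (a1^+2 + a2^+2).
    by rewrite e; repeat apply: addr_ge0 => //; apply: mulr_ge0 => //; nra.
  lra.
have [t [x1 [x2 [ht hx1 hx2 ea]]]] := disk' ha.
rewrite {1}(rho_Mk2 hd hs0 hs1 ra) ea Mk2_lin.
by apply: good_mix => //; exact: (good_pure2 hd hs0 hs1).
Qed.

End N2.

Local Close Scope complex_scope.
Unset Implicit Arguments.

Theorem corollary1 (R : realType) (n : nat) (hn : n = 2%N \/ n = 3%N)
    (f : 'rV[R]_n -> R) (hf : F_sc f)
    (rho : 'M[R[i]]_n) (hrho : density_matrix rho) :
  (forall (m : nat) (p : 'I_m -> R) (psi : 'I_m -> 'cV[R[i]]_n),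
      pure_decomposition rho p psi -> avg_coh f p psi <= f (diag_vec rho))
  /\ (exists (m : nat) (p : 'I_m -> R) (psi : 'I_m -> 'cV[R[i]]_n),
      pure_decomposition rho p psi /\ avg_coh f p psi = f (diag_vec rho)).
Proof.
split.
  move=> m p psi hd. apply: (part1 hf hd).
case: hn => hn; subst n; apply: part2; [exact: good2 | exact: good3].
Qed.
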